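(* Let $G=(V,E)$ be a connected undirected graph and $u:V\to\mathbb{R}$. (i) If $u\ge0$ and $\Delta_\infty u\le 0$ on $V$, then $u$ is constant. (ii) If $u\le 0$ and $\Delta_\infty u\ge0$ on $V$, then $u$ is constant.
   Context: For $x,y\in V$ write $x\sim y$ if $\{x,y\}\in E$. The discrete infinity Laplacian is $\Delta_\infty u(x)=\inf_{y\sim x}u(y)+\sup_{y\sim x}u(y)-2u(x)$. The graph is not assumed locally finite. *)

(* Defs.v *)
From HB Require Import structures.
From mathcomp Require Import all_boot all_order all_algebra.
From mathcomp Require Import all_classical all_reals ereal.
Set Implicit Arguments. Unset Strict Implicit. Unset Printing Implicit Defensive.
Import Order.TTheory GRing.Theory Num.Theory.
Local Open Scope classical_set_scope.
Local Open Scope ring_scope.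

(* A (possibly infinite, not necessarily locally finite) simple undirected
   graph on vertex type V is given by an adjacency relation adj,
   adj x y meaning {x,y} \in E, i.e. x ~ y. *)

Inductive reachable (V : Type) (adj : V -> V -> Prop) : V -> V -> Prop :=
  | reach_refl x : reachable adj x x
  | reach_step x y z : adj x y -> reachable adj y z -> reachable adj x z.

Definition graph_connected (V : Type) (adj : V -> V -> Prop) : Prop :=
  forall x y : V, reachable adj x y.

(* Discrete infinity Laplacian, with values in the extended reals since the
   graph need not be locally finite:
   Delta_oo u x = inf_{y ~ x} u y + sup_{y ~ x} u y - 2 u x. *)
Definition infty_laplacian (R : realType) (V : Type) (adj : V -> V -> Prop)
    (u : V -> R) (x : V) : \bar R :=
  (ereal_inf [set (u y)%:E | y in [set y | adj x y]]
   + ereal_sup [set (u y)%:E | y in [set y | adj x y]]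
   - (2 * u x)%:E)%E.

(* Main.v *)
Require Import Defs.
From HB Require Import structures.
From mathcomp Require Import all_boot all_order all_algebra.
From mathcomp Require Import all_classical all_reals ereal.
From mathcomp Require Import lra.
Import Order.TTheory GRing.Theory Num.Theory.
Local Open Scope classical_set_scope.
Local Open Scope ring_scope.

Section Core.
Variables (R : realType) (V : Type) (adj : V -> V -> Prop).
Hypothesis adj_sym : forall x y, adj x y -> adj y x.
Hypothesis conn : graph_connected adj.
Variable w : V -> R.
Hypothesis w0 : forall x, 0 <= w x.
Hypothesis step : forall b a t e, adj b a -> 0 < t -> w b + t <= w a -> 0 < e ->
  exists z, adj b z /\ w z < w b - t + e.

Lemma core_iter c : 0 < c -> forall n : nat, forall e, 0 < e -> forall a b,
  adj a b -> c + e <= w a - w b -> n%:R * c <= w b.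
Proof.
move=> c0; elim=> [|n IH] e e0 a b ab hab; first by rewrite mul0r.
have [z [bz hz]] := @step b a (c + e) (e / 2) (adj_sym _ _ ab)
   ltac:(lra) ltac:(lra) ltac:(lra).
have := IH (e / 2) ltac:(lra) b z bz ltac:(lra).
rewrite -addn1 natrD mulrDl mul1r; lra.
Qed.

Lemma core_edge a b : adj a b -> w b < w a -> False.
Proof.
move=> ab lt; set c := (w a - w b) / 2.
have c0 : 0 < c by rewrite /c; lra.
have := @core_iter c c0 (Num.truncn (w b / c)).+1 c c0 a b ab ltac:(rewrite /c; lra).
have := truncnS_gt (w b / c).
rewrite ltr_pdivrMr //; lra.
Qed.

Lemma core_const x y : w x = w y.
Proof.
elim: (conn x y) => // p q r pq _ <-.
case: (ltrgtP (w p) (w q)) => // h.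
- by case: (@core_edge _ _ (adj_sym _ _ pq) h).
- by case: (@core_edge _ _ pq h).
Qed.
End Core.

Theorem theorem3p7 (R : realType) (V : Type) (adj : V -> V -> Prop)
  (adj_sym : forall x y, adj x y -> adj y x)
  (adj_irr : forall x, ~ adj x x)
  (conn : graph_connected adj) :
  (forall u : V -> R, (forall x, 0 <= u x) ->
     (forall x, (infty_laplacian adj u x <= 0)%E) ->
     forall x y, u x = u y) /\
  (forall u : V -> R, (forall x, u x <= 0) ->
     (forall x, (0 <= infty_laplacian adj u x)%E) ->
     forall x y, u x = u y).
Proof.
split.
- move=> u u0 hL; apply: (@core_const _ _ _ adj_sym conn _ u0).
  move=> b a t e ba t0 hta e0.
  set S := [set (u y)%:E | y in [set y | adj b y]].
  have aS : S (u a)%:E by exists a.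
  have : (ereal_inf S < (u b - t + e)%:E)%E.
    rewrite ltNge; apply/negP => hinf.
    have hsup : ((u b + t)%:E <= ereal_sup S)%E.
      by apply: le_trans (ereal_sup_ubound aS); rewrite lee_fin.
    have := hL b; rewrite /infty_laplacian -/S => hl.
    have h1 : ((u b - t + e)%:E + (u b + t)%:E <= ereal_inf S + ereal_sup S)%E
      by apply: leeD.
    have h2 : ((u b - t + e)%:E + (u b + t)%:E - (2 * u b)%:E <=
               ereal_inf S + ereal_sup S - (2 * u b)%:E)%E
      by apply: leeB.
    have := le_trans h2 hl.
    rewrite -EFinD lee_fin; lra.
  move=> /ereal_inf_lt [_ [z bz <-]]; rewrite lte_fin => hz.
  by exists z.
- move=> u u0 hL x y.
  suff: (fun v => - u v) x = (fun v => - u v) y by move=> /= /eqP; rewrite eqr_opp => /eqP.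
  have w0 : forall x, 0 <= (fun v => - u v) x by move=> v /=; rewrite oppr_ge0.
  apply: (@core_const _ _ _ adj_sym conn _ w0).
  move=> b a t e ba t0 /= hta e0.
  set S := [set (u y)%:E | y in [set y | adj b y]].
  have aS : S (u a)%:E by exists a.
  have : ((u b + t - e)%:E < ereal_sup S)%E.
    rewrite ltNge; apply/negP => hsup.
    have hinf : (ereal_inf S <= (u b - t)%:E)%E.
      by apply: le_trans (ereal_inf_lbound aS) _; rewrite lee_fin; lra.
    have := hL b; rewrite /infty_laplacian -/S => hl.
    have h1 : (ereal_inf S + ereal_sup S <= (u b - t)%:E + (u b + t - e)%:E)%E
      by apply: leeD.
    have h2 : (ereal_inf S + ereal_sup S - (2 * u b)%:E <=
               (u b - t)%:E + (u b + t - e)%:E - (2 * u b)%:E)%E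
      by apply: leeB.
    have := le_trans hl h2.
    rewrite -EFinD lee_fin => hh; lra.
  move=> /ereal_sup_gt [_ [z bz <-]]; rewrite lte_fin => hz.
  exists z; split => //=; lra.
Qed.
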